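(* Let $(S,\sigma)$ be an enriched permutation of $\mathbb{Z}_{>0}$ (that is, $S\subseteq\mathbb{Z}_{>0}$ is a finite subset and $\sigma$ is a permutation of $S$). Then $R(I_S)\leq R(\sigma)$, with equality if and only if $\sigma=I_S$, where $I_S$ denotes the identity permutation of $S$.
   Context: Let $p$ be a prime and fix $y\in\mathbb{Z}_p$ which is not a positive integer, with $p$-adic expansion $y=\sum_{n\geq 0} y_n p^n$, $0\leq y_n<p$. For an integer $n\geq 1$ define $d(n)=p^w$, where $w$ is the unique integer with $\sum_{j=0}^{w-1} y_j < n \leq \sum_{j=0}^{w} y_j$; for $n<1$ set $d(n)=0$. For $m\in\mathbb{Z}$ set $y(m)=\sum_{n=1}^{m} d(n)$ (equal to $0$ when $m<1$). For $k_1,k_2\in\mathbb{Z}_{>0}$ define $R(k_1,k_2)=y(pk_1-k_2)$, and for an enriched permutation $(S,\sigma)$ of $\mathbb{Z}_{>0}$ define $R(\sigma)=\sum_{k\in S}R(k,\sigma(k))$. *)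

(* Defs.v *)
From Stdlib Require Import ClassicalEpsilon.
From mathcomp Require Import all_boot all_order all_algebra.
Set Implicit Arguments. Unset Strict Implicit. Unset Printing Implicit Defensive.
Import Order.TTheory GRing.Theory Num.Theory.

(* The p-adic integer y is represented by its digit sequence yd : nat -> nat,
   y = \sum_n yd n * p^n, with 0 <= yd n < p. *)

Definition psum (yd : nat -> nat) (w : nat) : nat := \sum_(0 <= j < w) yd j.

Definition dexp (yd : nat -> nat) (n : nat) : nat :=
  epsilon (inhabits 0%N) (fun w => psum yd w < n <= psum yd w.+1)%N.

Definition dfun (p : nat) (yd : nat -> nat) (n : nat) : nat :=
  if (0 < n)%N then (p ^ dexp yd n)%N else 0%N.

Definition ycum (p : nat) (yd : nat -> nat) (m : int) : nat :=
  match m with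
  | Posz k => (\sum_(1 <= n < k.+1) dfun p yd n)%N
  | Negz _ => 0%N
  end.

Definition Rk (p : nat) (yd : nat -> nat) (k1 k2 : nat) : nat :=
  ycum p yd ((Posz (p * k1)%N - Posz k2)%R).

Definition enriched_perm (S : seq nat) (sigma : nat -> nat) : Prop :=
  [/\ uniq S, all (fun k => 0 < k)%N S,
      {in S, forall k, sigma k \in S} & {in S &, injective sigma}].

Definition Rperm (p : nat) (yd : nat -> nat) (S : seq nat) (sigma : nat -> nat)
  : nat := (\sum_(k <- S) Rk p yd k (sigma k))%N.

(* Main.v *)
Require Import Defs.
From mathcomp Require Import all_boot all_order all_algebra.
From mathcomp Require Import zify.
From Stdlib Require Import Classical ClassicalEpsilon.
Set Implicit Arguments. Unset Strict Implicit. Unset Printing Implicit Defensive.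
Import Order.TTheory GRing.Theory Num.Theory.

Section D.
Variables (p : nat) (yd : nat -> nat).
Hypothesis hp : prime p.
Hypothesis hdig : forall n, (yd n < p)%N.
Hypothesis hy : ~ (exists N, forall n, (N <= n)%N -> yd n = 0%N).

Lemma psumS w : psum yd w.+1 = psum yd w + yd w.
Proof. by rewrite /psum big_nat_recr. Qed.

Lemma psum_mono w w' : (w <= w')%N -> (psum yd w <= psum yd w')%N.
Proof.
move=> h; rewrite -(subnKC h); elim: (w' - w) => [|k IH]; first by rewrite addn0.
by rewrite addnS psumS; apply: leq_trans IH (leq_addr _ _).
Qed.

Lemma psum_unb B : exists w, (B <= psum yd w)%N.
Proof.
elim: B => [|B [w Hw]]; first by exists 0%N.
have [n [Hn Hy]] : exists n, (w <= n)%N /\ yd n <> 0%N.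
  apply: NNPP => H; apply: hy; exists w => n Hn.
  apply: NNPP => H2; apply: H; by exists n.
exists n.+1; rewrite psumS.
have := psum_mono Hn; lia.
Qed.

Lemma dexp_spec n : (0 < n)%N ->
  (psum yd (dexp yd n) < n <= psum yd (dexp yd n).+1)%N.
Proof.
move=> n0; rewrite /dexp; apply: (epsilon_spec (inhabits 0%N) (fun w => psum yd w < n <= psum yd w.+1)%N).
have ex : exists w, (n <= psum yd w)%N by apply: psum_unb.
pose w := ex_minn ex.
have : (n <= psum yd w)%N by rewrite /w; case: ex_minnP.
have wmin : forall w', (n <= psum yd w')%N -> (w <= w')%N.
  by rewrite /w; case: ex_minnP.
case: w wmin => [|w] wmin hw.
  by move: hw; rewrite /psum big_geq //; lia.
exists w; rewrite hw andbT ltnNge; apply/negP => /wmin; lia.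
Qed.

Lemma dexp_mono a b : (0 < a)%N -> (a <= b)%N -> (dexp yd a <= dexp yd b)%N.
Proof.
move=> a0 ab.
have /andP[ha1 ha2] := dexp_spec a0.
have /andP[hb1 hb2] := dexp_spec (leq_trans a0 ab).
rewrite leqNgt; apply/negP => lt.
have := psum_mono lt; lia.
Qed.

Lemma dexp_strict a b : (0 < a)%N -> (a + p <= b)%N -> (dexp yd a < dexp yd b)%N.
Proof.
move=> a0 ab.
have /andP[ha1 ha2] := dexp_spec a0.
have /andP[hb1 hb2] := dexp_spec (leq_trans a0 (leq_trans (leq_addr p a) ab)).
rewrite ltnNge; apply/negP => le.
have := psum_mono (le : (dexp yd b).+1 <= (dexp yd a).+1)%N; rewrite psumS in ha2 *.
have := hdig (dexp yd a); lia.
Qed.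

Lemma dfun_mono a b : (a <= b)%N -> (dfun p yd a <= dfun p yd b)%N.
Proof.
move=> ab; rewrite /dfun; case: a ab => [|a] ab //.
rewrite (leq_trans _ ab) // leq_pexp2l ?prime_gt0 //.
exact: dexp_mono.
Qed.

Lemma dfun_strict a b : (1 <= b)%N -> (a + p <= b)%N -> (dfun p yd a < dfun p yd b)%N.
Proof.
move=> b0 ab; rewrite /dfun b0; case: a ab => [|a] ab /=.
  by rewrite expn_gt0 prime_gt0.
rewrite ltn_exp2l ?prime_gt1 //; exact: dexp_strict.
Qed.

Definition Dz (z : int) : nat := match z with Posz n => dfun p yd n | Negz _ => 0%N end.

Lemma ycum_step z : ycum p yd (z + 1)%R = (ycum p yd z + Dz (z + 1)%R)%N.
Proof.
case: z => [n|[|n]].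
- rewrite -PoszD addn1 /= big_nat_recr //.
- by rewrite /= big_geq // /dfun.
- have -> : (Negz n.+1 + 1 = Negz n)%R by rewrite !NegzE; lia.
  by [].
Qed.

Lemma ycum_add z t : ycum p yd (z + t%:Z)%R =
  (ycum p yd z + \sum_(s < t) Dz (z + s%:Z + 1)%R)%N.
Proof.
elim: t => [|t IH]; first by rewrite addr0 big_ord0 addn0.
have -> : (z + t.+1%:Z = (z + t%:Z) + 1)%R by lia.
by rewrite ycum_step IH big_ord_recr /= addnA.
Qed.

Lemma Dz_mono z z' : (z <= z')%R -> (Dz z <= Dz z')%N.
Proof.
case: z => [n|n]; case: z' => [n'|n'] //= h.
exact: dfun_mono.
Qed.

Lemma Dz_strict z z' : (1 <= z')%R -> (z + p%:Z <= z')%R -> (Dz z < Dz z')%N.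
Proof.
case: z' => [n'|n'] // h1; case: z => [n|n] h2 /=.
- apply: dfun_strict; lia.
- rewrite /dfun; have -> : (0 < n')%N by lia.
  by rewrite expn_gt0 prime_gt0.
Qed.

Lemma exchange j i m : (j < m)%N -> (i < m)%N ->
  (Rk p yd j i + Rk p yd m m < Rk p yd j m + Rk p yd m i)%N.
Proof.
move=> jm im.
have p1 := prime_gt1 hp.
have hpm : (p * j.+1 <= p * m)%N by rewrite leq_mul2l jm orbT.
have hm : (m <= p * m)%N by rewrite leq_pmull // ltnW.
set u := (Posz (p * j) - Posz m)%R.
set y := (Posz (p * m) - Posz m)%R.
have -> : Rk p yd j i = ycum p yd (u + (m - i)%N%:Z)%R.
  by rewrite /Rk /u; congr ycum; lia.
have -> : Rk p yd m i = ycum p yd (y + (m - i)%N%:Z)%R.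
  by rewrite /Rk /y; congr ycum; lia.
rewrite /Rk -/u -/y !ycum_add.
have : (0 < m - i)%N by lia.
case: (m - i)%N => [//|L] _.
rewrite !big_ord_recr /=.
have h1 : (\sum_(s < L) Dz (u + s%:Z + 1)%R <= \sum_(s < L) Dz (y + s%:Z + 1)%R)%N.
  apply: leq_sum => s _; apply: Dz_mono; rewrite /u /y; lia.
have h2 : (Dz (u + L%:Z + 1)%R < Dz (y + L%:Z + 1)%R)%N.
  apply: Dz_strict; rewrite /u /y; lia.
rewrite [_ + ycum p yd y]addnAC -!addnA ltn_add2l ltn_add2l; rewrite -addnS; exact: (leq_add h1 h2).
Qed.
End D.
Lemma has_max (S : seq nat) : S != [::] -> exists m, m \in S /\ forall k, k \in S -> (k <= m)%N.
Proof.
elim: S => [//|x s IH] _.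
case: s IH => [|y s] IH.
  by exists x; split => [|k]; rewrite ?inE // => /eqP ->.
have [m [ms hm]] := IH isT.
case: (leqP m x) => h.
  exists x; split; first by rewrite inE eqxx.
  move=> k; rewrite inE => /orP[/eqP ->|/hm]; lia.
exists m; split; first by rewrite inE ms orbT.
move=> k; rewrite inE => /orP[/eqP ->|/hm]; lia.
Qed.

Lemma perm_ind (F : nat -> nat -> nat)
  (hF : forall j i m, (j < m)%N -> (i < m)%N -> (F j i + F m m < F j m + F m i)%N) :
  forall n (S : seq nat) (sigma : nat -> nat), size S = n -> uniq S ->
  {in S, forall k, sigma k \in S} -> {in S &, injective sigma} ->
  (\sum_(k <- S) F k k < \sum_(k <- S) F k (sigma k))%N \/ {in S, forall k, sigma k = k}.
Proof.
elim=> [|n IH] S sigma hsz hu hin hinj.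
  by right; case: S hsz {hu hin hinj}.
have [m [mS hm]] : exists m, m \in S /\ forall k, k \in S -> (k <= m)%N.
  by apply: has_max; case: S hsz {hu hin hinj}.
set S' := rem m S.
have hperm := perm_to_rem mS.
have hu' : uniq S' by apply: rem_uniq.
have hmem : forall k, (k \in S') = (k != m) && (k \in S).
  by move=> k; rewrite /S' (mem_rem_uniq _ hu) inE.
have hsz' : size S' = n by rewrite /S' size_rem // hsz.
have sumS : forall G : nat -> nat, (\sum_(k <- S) G k = G m + \sum_(k <- S') G k)%N.
  by move=> G; rewrite (perm_big _ hperm) big_cons.
have [j jS sj] : exists2 j, j \in S & sigma j = m.
  have hmu : uniq (map sigma S) by rewrite map_inj_in_uniq.
  have hsub : {subset map sigma S <= S} by move=> x /mapP[k kS ->]; apply: hin.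
  have hs : (size S <= size (map sigma S))%N by rewrite size_map.
  have [_ heq] := uniq_min_size hmu hsub hs.
  by rewrite -heq in mS; case/mapP: mS => k kS ->; exists k.
have hlt : forall k, k \in S' -> (k < m)%N.
  by move=> k; rewrite hmem => /andP[km kS]; have := hm k kS; lia.
case: (eqVneq (sigma m) m) => hsm.
- have hin' : {in S', forall k, sigma k \in S'}.
    move=> k; rewrite !hmem => /andP[km kS]; rewrite hin // andbT.
    apply/eqP => e; move/eqP: km; apply; apply: hinj => //; by rewrite e hsm.
  have hinj' : {in S' &, injective sigma}.
    by move=> a b; rewrite !hmem => /andP[_ aS] /andP[_ bS]; apply: hinj.
  case: (IH S' sigma hsz' hu' hin' hinj') => [h|h].
    by left; rewrite !sumS hsm ltn_add2l.
  right => k kS; case: (eqVneq k m) => [->//|km]; apply: h; by rewrite hmem km.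
- left.
  set i := sigma m.
  have jm : j != m by apply: contra_neq hsm => e; rewrite /i -{1}e sj.
  have jS' : j \in S' by rewrite hmem jm.
  pose sigma' k := if k == j then i else sigma k.
  have iS : i \in S by apply: hin.
  have hin' : {in S', forall k, sigma' k \in S'}.
    move=> k; rewrite hmem => /andP[km kS]; rewrite /sigma'.
    case: eqP => [_|/eqP kj]; first by rewrite hmem hsm.
    rewrite hmem hin // andbT; apply/eqP => e.
    by move/eqP: kj; apply; apply: hinj => //; rewrite e sj.
  have hinj' : {in S' &, injective sigma'}.
    move=> a b; rewrite !hmem => /andP[am aS] /andP[bm bS]; rewrite /sigma'.
    case: (eqVneq a j) => [->|aj]; case: (eqVneq b j) => [->|bj] //.
    + rewrite /i => e; move/eqP: bm; case; apply: hinj => //.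
    + rewrite /i => e; move/eqP: am; case; apply: hinj => //.
    + exact: hinj.
  have hIH : (\sum_(k <- S') F k k <= \sum_(k <- S') F k (sigma' k))%N.
    case: (IH S' sigma' hsz' hu' hin' hinj') => [h|h]; first exact: ltnW.
    by rewrite (eq_big_seq (fun k => F k (sigma' k))) // => k kS; rewrite h.
  have hsw : (\sum_(k <- S') F k (sigma k) + F j i = \sum_(k <- S') F k (sigma' k) + F j m)%N.
    rewrite !(bigD1_seq j jS' hu') /= /sigma' eqxx sj.
    have -> : (\sum_(k <- S' | k != j) F k (if k == j then i else sigma k) = \sum_(k <- S' | k != j) F k (sigma k))%N.
      by apply: eq_bigr => k /negPf ->.
    move: (\sum_(k <- S' | k != j) F k (sigma k))%N => X; lia.
  have iS' : i \in S' by rewrite hmem hsm iS.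
  have hx := hF j i m (hlt j jS') (hlt i iS').
  rewrite !sumS.
  move: hIH hsw hx.
  generalize (\sum_(k <- S') F k k) (\sum_(k <- S') F k (sigma' k)) (\sum_(k <- S') F k (sigma k)).
  move=> A B C; rewrite -/i; lia.
Qed.

Theorem proposition5p7 (p : nat) (yd : nat -> nat)
  (hp : prime p)
  (hdig : forall n, (yd n < p)%N)
  (hy : ~ (exists N, forall n, (N <= n)%N -> yd n = 0%N))
  (S : seq nat) (sigma : nat -> nat)
  (hS : enriched_perm S sigma) :
  (Rperm p yd S id <= Rperm p yd S sigma)%N /\
  (Rperm p yd S id = Rperm p yd S sigma <-> {in S, forall k, sigma k = k}).
Proof.
case: hS => hu _ hin hinj.
have hF := exchange hp hdig hy.
have Heq : {in S, forall k, sigma k = k} -> Rperm p yd S id = Rperm p yd S sigma.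
  by move=> h; rewrite /Rperm; apply: eq_big_seq => k kS; rewrite h.
case: (perm_ind hF (erefl (size S)) hu hin hinj) => h.
  split; first exact: ltnW.
  split => [e|]; last exact: Heq.
  by move: h; rewrite -/(Rperm p yd S id) -/(Rperm p yd S sigma) e ltnn.
by split; [rewrite Heq | split].
Qed.
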